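(* For any integers $1\le n<m$, there exists a (connected) graph $G$ with $D(G)=n$ and $\dim(G)=m$.
   Context: All graphs are finite and simple. For a connected graph $G$ with shortest-path distance $d_G$, a set $S\subseteq V(G)$ is resolving if for any two distinct vertices $x,y$ there is $s\in S$ with $d_G(x,s)\neq d_G(y,s)$; the metric dimension $\dim(G)$ is the minimum size of a resolving set. A distinguishing coloring of a graph $G$ is a (not necessarily proper) vertex coloring such that the only automorphism of $G$ mapping every vertex to a vertex of the same color is the identity; the distinguishing number $D(G)$ is the minimum number of colors in a distinguishing coloring of $G$. *)

(* Defs.v *)
From mathcomp Require Import all_boot all_fingroup.
Set Implicit Arguments. Unset Strict Implicit. Unset Printing Implicit Defensive.

Definition simple_graph (T : finType) (e : rel T) : Prop :=
  symmetric e /\ irreflexive e.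

Definition connected_graph (T : finType) (e : rel T) : Prop :=
  forall x y : T, connect e x y.

Definition walk_len (T : finType) (e : rel T) (x y : T) (k : nat) : bool :=
  [exists p : k.-tuple T, path e x p && (last x p == y)].

(* shortest-path distance: the least k such that a walk of length k from
   x to y exists (searching k < #|T|; in a connected graph it exists). *)
Definition gdist (T : finType) (e : rel T) (x y : T) : nat :=
  find (walk_len e x y) (iota 0 #|T|).

Definition resolving (T : finType) (e : rel T) (S : {set T}) : Prop :=
  forall x y : T, x != y -> exists2 s, s \in S & gdist e x s != gdist e y s.

Definition metric_dim_is (T : finType) (e : rel T) (m : nat) : Prop :=
  (exists S : {set T}, resolving e S /\ #|S| = m) /\
  (forall S : {set T}, resolving e S -> m <= #|S|).

Definition automorphism (T : finType) (e : rel T) (f : {perm T}) : Prop :=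
  forall x y : T, e (f x) (f y) = e x y.

Definition distinguishing (T : finType) (e : rel T) (k : nat) (c : T -> 'I_k) : Prop :=
  forall f : {perm T}, automorphism e f -> (forall x, c (f x) = c x) -> f = 1%g.

Definition dist_number_is (T : finType) (e : rel T) (n : nat) : Prop :=
  (exists c : T -> 'I_n, distinguishing e c) /\
  (forall k (c : T -> 'I_k), distinguishing e c -> n <= k).

(* Main.v *)
Require Import Defs.
From mathcomp Require Import all_boot all_fingroup zify.
Set Implicit Arguments. Unset Strict Implicit. Unset Printing Implicit Defensive.

Lemma walk_ex (T : finType) (e : rel T) (D : T -> T -> nat) x :
  (forall y, D x y = 0 -> y = x) ->
  (forall y, 0 < D x y -> exists2 z, e z y & D x z = (D x y).-1) ->
  forall k y, D x y = k -> walk_len e x y k.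
Proof.
move=> H0 Hd; elim=> [|k IH] y Hy.
  rewrite (H0 _ Hy); apply/existsP; exists [tuple]; by rewrite /= eqxx.
have [z ez Dz] : exists2 z, e z y & D x z = (D x y).-1 by apply: Hd; rewrite Hy.
have /existsP [p /andP [pp lp]] : walk_len e x z k by apply: IH; rewrite Dz Hy.
apply/existsP; exists (rcons_tuple p y).
by rewrite /= rcons_path pp (eqP lp) ez last_rcons eqxx.
Qed.

Lemma lip_path (T : finType) (e : rel T) (D : T -> T -> nat) x :
  (forall y z, e y z -> D x z <= (D x y).+1) ->
  forall (s : seq T) a, path e a s -> D x (last a s) <= D x a + size s.
Proof.
move=> Hl; elim=> [|b s IH] a /=; first by rewrite addn0.
move=> /andP [eab ps]; have := IH _ ps; have := Hl _ _ eab; lia.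
Qed.

Lemma gdist_char (T : finType) (e : rel T) (D : T -> T -> nat) x :
  D x x = 0 ->
  (forall y, D x y = 0 -> y = x) ->
  (forall y z, e y z -> D x z <= (D x y).+1) ->
  (forall y, 0 < D x y -> exists2 z, e z y & D x z = (D x y).-1) ->
  forall y, gdist e x y = D x y /\ walk_len e x y (D x y).
Proof.
move=> Hxx H0 Hl Hd y.
have W := walk_ex H0 Hd.
have Lo : forall k, walk_len e x y k -> D x y <= k.
  move=> k /existsP [p /andP [pp /eqP lp]].
  have := lip_path Hl pp; rewrite lp Hxx size_tuple; lia.
have Ex : forall k y', D x y' = k -> forall i, i <= k -> exists z, D x z = i.
  elim=> [|k IH] y' Hy i Hi.
    by exists y'; rewrite Hy; lia.
  case: (ltngtP i k.+1) Hi => // [Hi _|-> _]; last by exists y'.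
  have [z _ Dz] : exists2 z, e z y' & D x z = (D x y').-1 by apply: Hd; rewrite Hy.
  by apply: (IH z); [rewrite Dz Hy | lia].
have Hc : D x y < #|T|.
  pose w (i : 'I_(D x y).+1) := odflt x [pick z | D x z == i].
  have Dw : forall i, D x (w i) = i.
    move=> i; rewrite /w; case: pickP => [z /eqP //|none].
    have [z Hz] := Ex _ y erefl i (ltn_ord i).
    by have := none z; rewrite Hz eqxx.
  have wi : injective w.
    by move=> i j Hij; apply: val_inj; rewrite /= -(Dw i) -(Dw j) Hij.
  by have := leq_card _ wi; rewrite card_ord.
split; last exact: W.
rewrite /gdist -(subnKC (ltnW Hc)) iotaD find_cat.
have -> : has (walk_len e x y) (iota 0 (D x y)) = false.
  apply/hasPn => k; rewrite mem_iota add0n => /andP [_ Hk].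
  by apply/negP => /Lo; lia.
rewrite size_iota add0n.
case E: (#|T| - D x y) => [|r]; first by move: E Hc; lia.
by rewrite /= W ?addn0.
Qed.

Lemma path_aut (T : finType) (e : rel T) (g : T -> T) :
  (forall a b, e (g a) (g b) = e a b) ->
  forall s a, path e (g a) (map g s) = path e a s.
Proof. move=> Hg; elim=> [|b s IH] a //=; by rewrite Hg IH. Qed.

Lemma aut_inv (T : finType) (e : rel T) (f : {perm T}) :
  automorphism e f -> automorphism e (f^-1)%g.
Proof. move=> Hf a b; by rewrite -{2}(permKV f a) -{2}(permKV f b) Hf. Qed.

Lemma walk_len_aut (T : finType) (e : rel T) (f : {perm T}) x y k :
  automorphism e f -> walk_len e (f x) (f y) k = walk_len e x y k.
Proof.
move=> Hf; apply/existsP/existsP => [[p /andP [pp /eqP lp]]|[p /andP [pp /eqP lp]]].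
  exists (map_tuple (f^-1)%g p); apply/andP; split.
    by rewrite /= -{1}(permK f x) (path_aut (aut_inv Hf)).
  by rewrite /= -{1}(permK f x) last_map lp permK.
exists (map_tuple f p); apply/andP; split.
  by rewrite /= (path_aut Hf).
by rewrite /= last_map lp.
Qed.

Lemma gdist_aut (T : finType) (e : rel T) (f : {perm T}) x y :
  automorphism e f -> gdist e (f x) (f y) = gdist e x y.
Proof. move=> Hf; rewrite /gdist; apply: eq_find => k; exact: walk_len_aut. Qed.

Lemma tperm_aut (T : finType) (e : rel T) a b :
  symmetric e -> irreflexive e ->
  (forall z, z != a -> z != b -> e a z = e b z) -> automorphism e (tperm a b).
Proof.
move=> Hs Hi Ht x y.
case: tpermP => [->|->|/eqP xa /eqP xb]; case: tpermP => [->|->|/eqP ya /eqP yb];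
  rewrite ?Hi //; try by rewrite Hs.
- by rewrite (Ht y ya yb).
- by rewrite (Ht y ya yb).
- by rewrite (Hs x b) (Hs x a) (Ht x xa xb).
- by rewrite (Hs x b) (Hs x a) (Ht x xa xb).
Qed.

Definition len (n i : nat) := if i < n then 1 else i - n + 2.
Definition V (n m : nat) := option {p : 'I_m.+1 * 'I_m.+1 | p.2 < len n p.1}.
Definition N n m := #|{: V n m}|.
Definition dec n m (x : 'I_(N n m)) : V n m := enum_val x.
Definition dp n m (x : 'I_(N n m)) : nat :=
  if dec x is Some p then (val p).2.+1 else 0.
Definition lg n m (x : 'I_(N n m)) : nat :=
  if dec x is Some p then nat_of_ord (val p).1 else 0.
Definition ctr n m : 'I_(N n m) := enum_rank (None : V n m).

Lemma dec_inj n m : injective (@dec n m).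
Proof. exact: enum_val_inj. Qed.

Lemma dp_ctr n m : dp (ctr n m) = 0.
Proof. by rewrite /dp /dec /ctr enum_rankK. Qed.
Lemma lg_ctr n m : lg (ctr n m) = 0.
Proof. by rewrite /lg /dec /ctr enum_rankK. Qed.

Lemma dp0 n m (x y : 'I_(N n m)) : dp x = 0 -> dp y = 0 -> x = y.
Proof.
rewrite /dp; case Ex: (dec x) => [p|] //; case Ey: (dec y) => [q|] // _ _.
by apply: dec_inj; rewrite Ex Ey.
Qed.

Lemma coord_inj n m (x y : 'I_(N n m)) :
  0 < dp x -> lg x = lg y -> dp x = dp y -> x = y.
Proof.
rewrite /dp /lg; case Ex: (dec x) => [[[a b] Hp]|] //; case Ey: (dec y) => [[[c d] Hq]|] //= _ H1 [H2].
apply: dec_inj; rewrite Ex Ey; congr Some; apply: val_inj => /=.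
by congr pair; apply: val_inj.
Qed.

Lemma P3 n m (x : 'I_(N n m)) : 0 < dp x -> lg x < m.+1 /\ dp x <= len n (lg x).
Proof.
rewrite /dp /lg; case: (dec x) => [[[a b] /= H]|] // _; split => //.
Qed.

Lemma P4 n m i d : i < m.+1 -> 0 < d <= len n i -> 0 < n ->
  exists x : 'I_(N n m), lg x = i /\ dp x = d.
Proof.
move=> Hi Hd Hn.
have Hd' : d.-1 < m.+1 by move: Hd; rewrite /len; case: ifP; lia.
have Hl : (Ordinal Hd' : nat) < len n (Ordinal Hi) by rewrite /=; lia.
exists (enum_rank (Some (exist _ (Ordinal Hi, Ordinal Hd') Hl) : V n m)).
by rewrite /lg /dp /dec enum_rankK /=; split => //; lia.
Qed.

Definition adj n m (x y : 'I_(N n m)) : bool :=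
  [|| (dp x == 0) && (dp y == 1), (dp y == 0) && (dp x == 1) |
      [&& 0 < dp x, 0 < dp y, lg x == lg y & (dp x == dp y + 1) || (dp y == dp x + 1)]].

Definition sp n m : rel 'I_(N n m) := fun x y => adj x y.

Definition Df n m (x y : 'I_(N n m)) : nat :=
  if [|| lg x == lg y, dp x == 0 | dp y == 0] then (dp x - dp y) + (dp y - dp x)
  else dp x + dp y.

Lemma len_pos n i : 0 < len n i.
Proof. rewrite /len; case: ifP; lia. Qed.
Lemma Hl n m (x y z : 'I_(N n m)) : sp y z -> Df x z <= (Df x y).+1.
Proof. rewrite /sp /adj /Df. case: ifP; case: ifP; lia. Qed.

Lemma Hxx n m (x : 'I_(N n m)) : Df x x = 0.
Proof. rewrite /Df eqxx /=; lia. Qed.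

Lemma Hz n m (x y : 'I_(N n m)) : Df x y = 0 -> y = x.
Proof.
rewrite /Df; case: ifP => H E.
  have [Hx|Hx] := posnP (dp x).
    by apply: dp0 => //; lia.
  by symmetry; apply: coord_inj => //; lia.
by apply: dp0; lia.
Qed.

Lemma Hd n m (x y : 'I_(N n m)) : 0 < n ->
  0 < Df x y -> exists2 z, sp z y & Df x z = (Df x y).-1.
Proof.
move=> Hn.
have [Hy|Hy] := posnP (dp y).
  move=> H; have Hx : 0 < dp x by move: H; rewrite /Df; case: ifP; lia.
  have [Hlx Hlen] := P3 Hx.
  have L1 := len_pos n (lg x).
  have [z [lz dz]] := @P4 n m (lg x) 1 Hlx (ltac:(lia)) Hn.
  exists z; rewrite /sp /adj /Df; do ?case: ifP; lia.
have [Hly Hleny] := P3 Hy.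
case E: ((lg x == lg y) && (dp y < dp x)).
  move: E => /andP [/eqP E1 E2] H.
  have Hx : 0 < dp x by lia.
  have [Hlx Hlenx] := P3 Hx.
  have [z [lz dz]] := @P4 n m (lg y) (dp y).+1 Hly (ltac:(rewrite -E1; lia)) Hn.
  exists z; rewrite /sp /adj /Df; do ?case: ifP; lia.
move=> H.
have [Hy1|Hy1] := eqVneq (dp y) 1.
  exists (ctr n m); move: E H; rewrite /sp /adj /Df dp_ctr lg_ctr; do ?case: ifP; lia.
have [z [lz dz]] := @P4 n m (lg y) (dp y).-1 Hly (ltac:(lia)) Hn.
exists z; move: E H; rewrite /sp /adj /Df; do ?case: ifP; lia.
Qed.

Lemma sp_sym n m : symmetric (@sp n m).
Proof. move=> x y; rewrite /sp /adj; apply/idP/idP; lia. Qed.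

Lemma sp_irr n m : irreflexive (@sp n m).
Proof. move=> x; rewrite /sp /adj; apply/negP; lia. Qed.

Lemma gdist_sp n m (x y : 'I_(N n m)) : 0 < n -> gdist (@sp n m) x y = Df x y.
Proof.
move=> Hn; have := @gdist_char _ (@sp n m) (@Df n m) x (Hxx x) (@Hz n m x)
  (@Hl n m x) (fun y => @Hd n m x y Hn) y; case=> //.
Qed.

Lemma sp_conn n m : 0 < n -> connected_graph (@sp n m).
Proof.
move=> Hn x y; have [_ /existsP [p /andP [pp /eqP lp]]] :=
  @gdist_char _ (@sp n m) (@Df n m) x (Hxx x) (@Hz n m x)
  (@Hl n m x) (fun y => @Hd n m x y Hn) y.
by apply/connectP; exists p.
Qed.

Lemma nb_eq n m (z a b : 'I_(N n m)) : sp z a -> sp z b -> 0 < dp z -> dp a = dp b -> a = b.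
Proof.
move=> Ha Hb Hz Hab.
have [Ha0|Ha0] := posnP (dp a); first by apply: dp0; lia.
apply: coord_inj => //.
have : lg a = lg z by move: Ha; rewrite /sp /adj; lia.
have : lg b = lg z by move: Hb; rewrite /sp /adj; lia.
lia.
Qed.

Lemma ctr_unique n m (z a b c : 'I_(N n m)) : a != b -> b != c -> a != c ->
  sp z a -> sp z b -> sp z c -> z = ctr n m.
Proof.
move=> /eqP nab /eqP nbc /eqP nac Ha Hb Hc.
have [Hz|Hz] := posnP (dp z); first by apply: dp0 => //; rewrite dp_ctr.
have Da : dp a = (dp z).-1 \/ dp a = (dp z).+1 by move: Ha; rewrite /sp /adj; lia.
have Db : dp b = (dp z).-1 \/ dp b = (dp z).+1 by move: Hb; rewrite /sp /adj; lia.
have Dc : dp c = (dp z).-1 \/ dp c = (dp z).+1 by move: Hc; rewrite /sp /adj; lia.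
have : dp a = dp b \/ dp b = dp c \/ dp a = dp c by lia.
case=> [E|[E|E]].
- by case: nab; apply: (nb_eq Ha Hb Hz E).
- by case: nbc; apply: (nb_eq Hb Hc Hz E).
- by case: nac; apply: (nb_eq Ha Hc Hz E).
Qed.

Definition vtx n m i d : 'I_(N n m) := odflt (ctr n m) [pick x | (lg x == i) && (dp x == d)].

Lemma vtxP n m i d : 0 < n -> i < m.+1 -> 0 < d <= len n i ->
  lg (vtx n m i d) = i /\ dp (vtx n m i d) = d.
Proof.
move=> Hn Hi Hd; rewrite /vtx; case: pickP => [x /andP [/eqP -> /eqP ->] //|none].
have [x [lx dx]] := P4 Hi Hd Hn.
by have := none x; rewrite lx dx !eqxx.
Qed.

Definition leafQ n m (z : 'I_(N n m)) := forall a b, sp z a -> sp z b -> a = b.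

Lemma leafQ_len n m (z : 'I_(N n m)) : 0 < n -> leafQ z -> 0 < dp z -> dp z = len n (lg z).
Proof.
move=> Hn Q Hz; have [Hl Hle] := P3 Hz.
have [Hlt0|Hge0] := ltnP (dp z) (len n (lg z)); last lia.
pose s := vtx n m (lg z) (dp z).+1.
have [ls ds] : lg s = lg z /\ dp s = (dp z).+1 := @vtxP n m (lg z) (dp z).+1 Hn Hl (ltac:(lia)).
have [Hz1|Hz1] := eqVneq (dp z) 1.
  have := Q s (ctr n m); rewrite /sp /adj dp_ctr lg_ctr => H.
  have E : s = ctr n m by apply: H; lia.
  by move: ds; rewrite E dp_ctr.
pose p := vtx n m (lg z) (dp z).-1.
have [lp dpp] : lg p = lg z /\ dp p = (dp z).-1 := @vtxP n m (lg z) (dp z).-1 Hn Hl (ltac:(lia)).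
have E : s = p by apply: Q; rewrite /sp /adj; lia.
by move: ds; rewrite E dpp; lia.
Qed.

Lemma leafQ_leaf n m (z : 'I_(N n m)) : 0 < dp z -> dp z = len n (lg z) -> leafQ z.
Proof.
move=> Hz E a b Ha Hb; apply: (nb_eq Ha Hb Hz).
have Da : dp a = (dp z).-1.
  have [Ha0|Ha0] := posnP (dp a); first by move: Ha; rewrite /sp /adj; lia.
  have [_ La] := P3 Ha0.
  have : lg a = lg z by move: Ha; rewrite /sp /adj; lia.
  move=> Ela; rewrite Ela -E in La; move: Ha; rewrite /sp /adj; lia.
have Db : dp b = (dp z).-1.
  have [Hb0|Hb0] := posnP (dp b); first by move: Hb; rewrite /sp /adj; lia.
  have [_ Lb] := P3 Hb0.
  have : lg b = lg z by move: Hb; rewrite /sp /adj; lia.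
  move=> Elb; rewrite Elb -E in Lb; move: Hb; rewrite /sp /adj; lia.
by rewrite Da Db.
Qed.

Lemma leafQ_aut n m (f : {perm 'I_(N n m)}) z :
  automorphism (@sp n m) f -> leafQ z -> leafQ (f z).
Proof.
move=> Hf Q a b Ha Hb.
have Hi := aut_inv Hf.
have E : (f^-1)%g a = (f^-1)%g b.
  apply: Q.
    by rewrite -(Hf z) permKV.
  by rewrite -(Hf z) permKV.
by rewrite -(permKV f a) E permKV.
Qed.

Definition col n' m (x : 'I_(N n'.+1 m)) : 'I_n'.+1 := inord (lg x).

Lemma rigid n' m : n'.+1 < m -> distinguishing (@sp n'.+1 m) (@col n' m).
Proof.
move=> Hnm f Hf Hc.
have Hn : 0 < n'.+1 by [].
have Hctr : f (ctr _ m) = ctr _ m.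
  have L0 := len_pos n'.+1 0; have L1 := len_pos n'.+1 1; have L2 := len_pos n'.+1 2.
  have [la da] := @vtxP n'.+1 m 0 1 Hn (ltac:(lia)) (ltac:(lia)).
  have [lb db] := @vtxP n'.+1 m 1 1 Hn (ltac:(lia)) (ltac:(lia)).
  have [lc dc] := @vtxP n'.+1 m 2 1 Hn (ltac:(lia)) (ltac:(lia)).
  have nab : f (vtx _ m 0 1) != f (vtx _ m 1 1).
    by rewrite (inj_eq perm_inj); apply/eqP => E; move: la; rewrite E lb.
  have nbc : f (vtx _ m 1 1) != f (vtx _ m 2 1).
    by rewrite (inj_eq perm_inj); apply/eqP => E; move: lb; rewrite E lc.
  have nac : f (vtx _ m 0 1) != f (vtx _ m 2 1).
    by rewrite (inj_eq perm_inj); apply/eqP => E; move: la; rewrite E lc.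
  apply: (ctr_unique nab nbc nac); rewrite Hf /sp /adj dp_ctr; lia.
have Hdp : forall x, dp (f x) = dp x.
  move=> x; have := gdist_aut (ctr _ m) x Hf.
  rewrite Hctr !gdist_sp // /Df dp_ctr; do ?case: ifP; lia.
have Hleaf : forall l, 0 < dp l -> dp l = len n'.+1 (lg l) -> f l = l.
  move=> l Hl El.
  have Q := leafQ_aut Hf (leafQ_leaf Hl El).
  have Hfl : 0 < dp (f l) by rewrite Hdp.
  have Ef := leafQ_len Hn Q Hfl.
  have [Hl1 _] := P3 Hl; have [Hl2 _] := P3 Hfl.
  apply: coord_inj; [exact: Hfl | | exact: Hdp].
  have : (lg (f l) < n'.+1) && (lg l < n'.+1) \/ lg (f l) = lg l.
    move: Ef El; rewrite Hdp /len; set a := lg (f l); set b := lg l; do ?case: ifP; move=> /= *; lia.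
  case=> // /andP [h1 h2].
  have := congr1 val (Hc l); rewrite /col /= !inordK //.
apply/permP => x; rewrite perm1.
have [Hx|Hx] := posnP (dp x); first by apply: dp0; rewrite ?Hdp.
have [Hlx Hlenx] := P3 Hx.
pose l := vtx n'.+1 m (lg x) (len n'.+1 (lg x)).
have [ll dl] : lg l = lg x /\ dp l = len n'.+1 (lg x) := @vtxP n'.+1 m (lg x) (len n'.+1 (lg x)) Hn Hlx (ltac:(have := len_pos n'.+1 (lg x); lia)).
have Hl : 0 < dp l by rewrite dl len_pos.
have Fl := Hleaf l Hl (ltac:(by rewrite dl ll)).
have := gdist_aut l x Hf; rewrite Fl !gdist_sp // => E.
have Hfx : 0 < dp (f x) by rewrite Hdp.
apply: coord_inj; [exact: Hfx | | exact: Hdp].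
move: E; rewrite /Df Hdp ll dl; do ?case: ifP; lia.
Qed.

Lemma len_small n i : i < n -> len n i = 1.
Proof. by rewrite /len => ->. Qed.

Lemma dist_lower n m k (c : 'I_(N n m) -> 'I_k) : 0 < n -> n < m ->
  distinguishing (@sp n m) c -> n <= k.
Proof.
move=> Hn Hnm Hd; rewrite leqNgt; apply/negP => Hk.
pose u (i : 'I_n) := vtx n m i 1.
have Hu : forall i : 'I_n, lg (u i) = i /\ dp (u i) = 1.
  move=> i; have := ltn_ord i; move=> Hi; apply: vtxP => //; first lia.
  by rewrite len_small.
pose h i := c (u i).
have : ~~ injectiveb h.
  apply/negP => /injectiveP inj; have := leq_card _ inj; rewrite !card_ord; lia.
case/injectivePn => i [j nij Eij].
have [li di] := Hu i; have [lj dj] := Hu j.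
have nab : u i <> u j.
  move=> E; move/eqP: nij; apply; apply: val_inj; rewrite /= -li -lj E //.
have tw : forall z, z != u i -> z != u j -> sp (u i) z = sp (u j) z.
  move=> z /eqP zi /eqP zj.
  have [Hz0|Hz0] := posnP (dp z).
    by rewrite /sp /adj di dj Hz0.
  have [Hlz Hlenz] := P3 Hz0.
  have F : forall a : 'I_n, lg (u a) = a -> dp (u a) = 1 -> z <> u a -> sp (u a) z = false.
    move=> a la da za; apply/negP => /= H.
    have E : lg z = a by move: H; rewrite /sp /adj; lia.
    rewrite E len_small // in Hlenz.
    apply: za; apply: coord_inj => //; lia.
  by rewrite (F i) // (F j).
have Ht := tperm_aut (@sp_sym n m) (@sp_irr n m) tw.
have := Hd _ Ht.
have Hcol : forall x, c (tperm (u i) (u j) x) = c x.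
  by move=> x; case: tpermP => [->|->|] //.
move=> /(_ Hcol) E.
apply: nab; have := congr1 (fun g : {perm _} => g (u i)) E.
by rewrite /= tpermL perm1.
Qed.

Lemma dim_lower n m (S : {set 'I_(N n m)}) : 0 < n -> n < m ->
  resolving (@sp n m) S -> m <= #|S|.
Proof.
move=> Hn Hnm HS.
pose H := [set i : 'I_m.+1 | [exists s in S, (0 < dp s) && (lg s == i)]].
have Hpair : forall i j : 'I_m.+1, i != j -> (i \in H) || (j \in H).
  move=> i j nij; case/boolP: (i \in H) => //= Hi; apply/negPn/negP => Hj.
  have Hi1 : 0 < 1 <= len n i by rewrite len_pos.
  have Hj1 : 0 < 1 <= len n j by rewrite len_pos.
  have [la da] := @vtxP n m i 1 Hn (ltn_ord i) Hi1.
  have [lb db] := @vtxP n m j 1 Hn (ltn_ord j) Hj1.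
  have nab : vtx n m i 1 != vtx n m j 1.
    apply/eqP => E; move/eqP: nij; apply; apply: val_inj; rewrite /= -la -lb E //.
  have [s sS] := HS _ _ nab; rewrite !gdist_sp //.
  have Ni : ~~ ((0 < dp s) && (lg s == i)).
    apply/negP => Hs; move/negP: Hi; apply; rewrite inE; apply/existsP; exists s; rewrite sS.
    exact: Hs.
  have Nj : ~~ ((0 < dp s) && (lg s == j)).
    apply/negP => Hs; move/negP: Hj; apply; rewrite inE; apply/existsP; exists s; rewrite sS.
    exact: Hs.
  move: Ni Nj; rewrite /Df la lb da db; set a := lg s; do ?case: ifP; move=> /= *; lia.
have Hc : #|~: H| <= 1.
  apply/card_le1_eqP => i j; rewrite !inE => Hi Hj.
  apply/eqP; apply/negP => nij.
  by have := Hpair j i (introT negP nij); rewrite !inE (negbTE Hi) (negbTE Hj).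
have HC := cardsC H; rewrite card_ord in HC.
have HS' : #|H| <= #|S|.
  apply: (leq_trans _ (leq_imset_card (fun s => inord (lg s) : 'I_m.+1) S)).
  apply: subset_leq_card; apply/subsetP => i; rewrite inE => /existsP [s /andP [sS /andP [Hs /eqP Ei]]].
  apply/imsetP; exists s => //; apply: val_inj; rewrite /= inordK Ei //.
lia.
Qed.

Lemma res_pair n m (i : 'I_m.+1) (x y : 'I_(N n m)) : 0 < n ->
  (dp x != dp y) || [&& 0 < dp x, dp x == dp y, lg x == i & lg y != i] ->
  gdist (@sp n m) x (vtx n m i (len n i)) != gdist (@sp n m) y (vtx n m i (len n i)).
Proof.
move=> Hn H.
have Hi : 0 < len n i <= len n i by rewrite len_pos leqnn.
have [ll dl] := @vtxP n m i (len n i) Hn (ltn_ord i) Hi.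
rewrite !gdist_sp //.
have Ax : 0 < dp x -> lg x = i -> dp x <= len n i.
  by move=> Hx E; have [_] := P3 Hx; rewrite E.
have Ay : 0 < dp y -> lg y = i -> dp y <= len n i.
  by move=> Hy E; have [_] := P3 Hy; rewrite E.
have Li := len_pos n i.
move: H Ax Ay Li; rewrite /Df ll dl; set a := lg x; set b := lg y; set L := len n i.
do ?case: ifP; move=> /= *; lia.
Qed.

Definition landmarks n m : {set 'I_(N n m)} :=
  [set vtx n m i (len n i) | i : 'I_m.+1 in [set~ ord0]].

Lemma landmarks_card n m : 0 < n -> #|landmarks n m| = m.
Proof.
move=> Hn; rewrite /landmarks card_in_imset ?cardsC1 ?card_ord //.
move=> i j _ _ E.
have Hi : 0 < len n i <= len n i by rewrite len_pos leqnn.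
have Hj : 0 < len n j <= len n j by rewrite len_pos leqnn.
have [li _] := @vtxP n m i (len n i) Hn (ltn_ord i) Hi.
have [lj _] := @vtxP n m j (len n j) Hn (ltn_ord j) Hj.
by apply/eqP; rewrite -val_eqE /= -li -lj E.
Qed.

Lemma landmarks_res n m : 0 < n -> n < m -> resolving (@sp n m) (landmarks n m).
Proof.
move=> Hn Hnm x y nxy.
have mem : forall i : 'I_m.+1, i != ord0 -> vtx n m i (len n i) \in landmarks n m.
  by move=> i Hi; apply/imsetP; exists i => //; rewrite !inE.
case/boolP: (dp x == dp y) => Edp; last first.
  have H1 : 1 < m.+1 by lia.
  exists (vtx n m (Ordinal H1) (len n (Ordinal H1))).
    by apply: mem; apply/eqP => /(congr1 val).
  by apply: res_pair; rewrite // Edp.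
have [Hx|Hx] := posnP (dp x).
  by move: nxy; rewrite (@dp0 n m x y) ?eqxx //; move/eqP: Edp; lia.
have Nl : lg x != lg y.
  apply/eqP => E; move/eqP: nxy; apply; apply: coord_inj => //; exact/eqP.
have [Hlx _] := P3 Hx.
have Hy : 0 < dp y by move/eqP: Edp; lia.
have [Hly _] := P3 Hy.
case/boolP: (lg x == 0) => Ex.
  exists (vtx n m (Ordinal Hly) (len n (Ordinal Hly))).
    by apply: mem; apply/eqP => /(congr1 val) /= E; move: Nl; rewrite (eqP Ex) E.
  rewrite eq_sym; apply: res_pair => //=.
  by rewrite Hy eq_sym Edp eqxx Nl orbT.
exists (vtx n m (Ordinal Hlx) (len n (Ordinal Hlx))).
  by apply: mem; apply/eqP => /(congr1 val) /= E; move: Ex; rewrite E.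
apply: res_pair => //=.
by rewrite Hx Edp eqxx eq_sym Nl orbT.
Qed.

Theorem proposition3p4 (n m : nat) :
  1 <= n -> n < m ->
  exists (N : nat) (e : rel 'I_N),
    [/\ simple_graph e, connected_graph e,
        dist_number_is e n & metric_dim_is e m].
Proof.
case: n => [//|n'] _ Hnm.
exists (N n'.+1 m), (@sp n'.+1 m); split.
- split; [exact: sp_sym | exact: sp_irr].
- exact: sp_conn.
- split; first by exists (@col n' m); exact: rigid.
  by move=> k c Hc; apply: (dist_lower _ Hnm Hc).
- split; first by exists (landmarks n'.+1 m); split;
    [exact: landmarks_res | exact: landmarks_card].
  by move=> S HS; apply: (dim_lower _ Hnm HS).
Qed.
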